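(* Let $\mu$ be a probability measure on $\mathbb{R}$, let $X_1,X_2,\dots$ be i.i.d. $2\times2$ random matrices whose entries are i.i.d. with law $\mu$, and $A_n=X_1X_2\cdots X_n$. Then for every $n\ge1$, $\Pr(A_n\text{ has all eigenvalues real})\ge\frac12$. *)

(* Defs.v *)
From HB Require Import structures.
From mathcomp Require Import all_boot all_order all_algebra.
From mathcomp Require Import all_classical all_reals all_analysis.
From mathcomp Require complex.
Import complex.ComplexField.

Set Implicit Arguments.
Unset Strict Implicit.
Unset Printing Implicit Defensive.

Import Order.TTheory GRing.Theory Num.Theory.
Local Open Scope classical_set_scope.
Local Open Scope ring_scope.

Definition all_eigenvalues_real (R : realType) (n : nat) (A : 'M[R]_n) : Prop :=
  forall z : complex.complex R,
    eigenvalue (map_mx (complex.real_complex R) A) z -> complex.Im z = 0.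

Definition mutually_independent d (T : measurableType d) (R : realType)
    (P : probability T R) (I : eqType) (X : I -> T -> R) : Prop :=
  forall (J : seq I) (B : I -> set R),
    uniq J -> (forall i, i \in J -> measurable (B i)) ->
    P (\bigcap_(i in [set i | i \in J]) (X i @^-1` B i)) =
      (\prod_(i <- J) P (X i @^-1` B i))%E.

Definition prod_mx (R : realType) (X : nat -> 'M[R]_2) (n : nat) : 'M[R]_2 :=
  \prod_(1 <= k < n.+1) X k.

(* Main.v *)
Require Import Defs.
From HB Require Import structures.
From mathcomp Require Import all_boot all_order all_algebra.
From mathcomp Require Import all_classical all_reals all_analysis.
From mathcomp Require complex.
From mathcomp Require Import ring lra.
Import Order.TTheory GRing.Theory Num.Theory.
Local Open Scope classical_set_scope.
Local Open Scope ring_scope.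

Module ComplexPart.
Import complex.ComplexField.

Lemma det22 (R : comNzRingType) (A : 'M[R]_2) :
  \det A = A 0 0 * A 1 1 - A 0 1 * A 1 0.
Proof.
rewrite (expand_det_row _ 0) !big_ord_recr big_ord0 /cofactor !det_mx11 !mxE /=.
have e1 : widen_ord (leqnSn 1) ord_max = 0 :> 'I_2 by apply/val_inj.
have e2 : lift 0 (0 : 'I_1) = 1 :> 'I_2 by apply/val_inj.
have e3 : lift ord_max (0 : 'I_1) = 0 :> 'I_2 by apply/val_inj.
have e4 : ord_max = 1 :> 'I_2 by apply/val_inj.
rewrite e1 e2 e3 e4 add0r expr0 expr1 mul1r mulN1r mulrN.
by [].
Qed.

Lemma eig_det (F : fieldType) n (A : 'M[F]_n) a :
  eigenvalue A a = (\det (a%:M - A) == 0).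
Proof.
apply/eigenvalueP/det0P=> [[v Av_av v_nz] | [v v_nz Av_av]]; exists v => //.
  by rewrite mulmxBr Av_av mul_mx_scalar subrr.
by apply/eqP; rewrite -mul_mx_scalar eq_sym -subr_eq0 -mulmxBr Av_av.
Qed.


Definition disc (R : pzRingType) (A : 'M[R]_2) :=
  (A 0 0 - A 1 1) ^+ 2 + 4%:R * (A 0 1 * A 1 0).
Arguments disc {R}.

Lemma detC (R : realType) (A : 'M[R]_2) (x y : R) :
  \det ((complex.Complex x y)%:M - map_mx (complex.real_complex R) A) =
  complex.Complex ((x - A 0 0) * (x - A 1 1) - y ^+ 2 - A 0 1 * A 1 0)
                  (y * (2%:R * x - A 0 0 - A 1 1)).
Proof.
rewrite det22 !mxE /= mulr1n mulr0n !sub0r /complex.real_complex_def.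
rewrite -[LHS]/(complex.Complex _ _).
congr complex.Complex; ring.
Qed.

Lemma eig_real (R : realType) (A : 'M[R]_2) :
  all_eigenvalues_real A <-> 0 <= disc A.
Proof.
split.
- move=> H; rewrite leNgt; apply/negP => hd.
  set s := Num.sqrt (- disc A).
  have s0 : 0 < s by rewrite sqrtr_gt0 oppr_gt0.
  have ss : s ^+ 2 = - disc A by rewrite sqr_sqrtr // oppr_ge0 ltW.
  have := H (complex.Complex ((A 0 0 + A 1 1) / 2%:R) (s / 2%:R)).
  rewrite eig_det detC /=.
  have -> : complex.Complex
    (((A 0 0 + A 1 1) / 2%:R - A 0 0) * ((A 0 0 + A 1 1) / 2%:R - A 1 1) -
     (s / 2%:R) ^+ 2 - A 0 1 * A 1 0)
    (s / 2%:R * (2%:R * ((A 0 0 + A 1 1) / 2%:R) - A 0 0 - A 1 1)) = 0.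
    rewrite -[RHS]/(complex.Complex 0 0); congr complex.Complex.
      move: ss; rewrite /disc => ss.
      have e : (s / 2%:R) ^+ 2 = s ^+ 2 / 4%:R by field => //.
      rewrite e ss; field => //.
    by field.
  move=> hh; have h := hh (eqxx _).
  have : s / 2%:R != 0 by rewrite mulf_neq0 ?invr_eq0 // gt_eqF.
  by rewrite h eqxx.
- move=> hd [x y]; rewrite eig_det detC => /eqP h.
  have h2 := congr1 (@complex.Im R) h; have h1 := congr1 (@complex.Re R) h.
  rewrite /= in h1 h2.
  move/eqP: h2; rewrite mulf_eq0 => /orP [/eqP //| /eqP hx].
  have hy : y ^+ 2 <= 0.
    move: hd; rewrite /disc => hd.
    nra.
  apply/eqP; rewrite -sqrf_eq0 eq_le hy sqr_ge0 //.
Qed.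

End ComplexPart.
Import ComplexPart.



Definition idx m := ('I_m.+1 * 'I_2 * 'I_2)%type.
Record vecK (R : realType) (m : nat) := VecK { vv : idx m -> R }.
HB.instance Definition _ R m := gen_eqMixin (vecK R m).
HB.instance Definition _ R m := gen_choiceMixin (vecK R m).
HB.instance Definition _ (R : realType) m := isPointed.Build (vecK R m) (@VecK R m (fun _ => 0)).
Arguments vv {R m}.
Definition rect (R : realType) m (B : idx m -> set R) : set (vecK R m) :=
  [set y | forall k, B k (vv y k)].
Definition Grect (R : realType) m : set (set (vecK R m)) :=
  [set E | exists2 B : idx m -> set R, (forall k, measurable (B k)) & E = rect R m B].
Notation Sp R m := (g_sigma_algebraType (Grect R m)).

Lemma coord_meas (R : realType) m (k : idx m) :
  measurable_fun setT (fun y : Sp R m => vv y k).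
Proof.
move=> _ A mA; rewrite setTI.
apply: sub_gen_smallest.
exists (fun k' => if k' == k then A else setT).
  by move=> k'; case: ifP.
apply/seteqP; split => y /=.
  by move=> Ay k'; case: ifP => // /eqP ->.
by move=> /(_ k); rewrite eqxx.
Qed.

Definition Mk (R : realType) m (y : vecK R m) (k : nat) : 'M[R]_2 :=
  \matrix_(i, j) vv y (inord k.-1, i, j).
Definition Fp (R : realType) m (y : vecK R m) (l : nat) : 'M[R]_2 :=
  \prod_(1 <= k < l.+1) Mk R m y k.

Lemma Fp_meas (R : realType) m l (i j : 'I_2) :
  measurable_fun setT (fun y : Sp R m => Fp R m y l i j).
Proof.
elim: l i j => [|l IH] i j.
  rewrite /Fp.
  under eq_fun do rewrite big_geq // mxE.
  exact: measurable_cst.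
rewrite (_ : (fun y : Sp R m => Fp R m y l.+1 i j) = (fun y =>
   Fp R m y l i 0 * vv y (inord l, 0, j) + Fp R m y l i 1 * vv y (inord l, 1, j))); last first.
  apply/funext => y; rewrite /Fp big_nat_recr //= -mulmxE mxE !big_ord_recr big_ord0 /Mk !mxE.
  rewrite (_ : widen_ord (leqnSn 1) ord_max = 0 :> 'I_2); last exact/val_inj.
  rewrite (_ : ord_max = 1 :> 'I_2); last exact/val_inj.
  by rewrite /= add0r.
apply: measurable_realfun.measurable_funD; apply: measurable_realfun.measurable_funM => //.
  exact: coord_meas.
exact: coord_meas.
Qed.

Section Prob.
Context (R : realType) (mu : probability R R)
  (d : measure_display) (T : measurableType d) (P : probability T R)
  (X : nat -> T -> 'M[R]_2)
  (Xmeas : forall k (i j : 'I_2), measurable_fun setT (fun w => X k.+1 w i j))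
  (Xlaw : forall k (i j : 'I_2) (B : set R), measurable B ->
     P ((fun w => X k.+1 w i j) @^-1` B) = mu B)
  (Xind : mutually_independent P
     (fun kij : nat * 'I_2 * 'I_2 => fun w => X kij.1.1.+1 w kij.1.2 kij.2))
  (m : nat).

Definition emb (k : idx m) : nat * 'I_2 * 'I_2 := (val k.1.1, k.1.2, k.2).

Definition Yv (g : idx m -> idx m) (w : T) : Sp R m :=
  @VecK R m (fun k => X (g k).1.1.+1 w (g k).1.2 (g k).2).

Lemma meas_seq (Z : idx m -> T -> R) (hZ : forall k, measurable_fun setT (Z k))
  (B : idx m -> set R) (hB : forall k, measurable (B k)) (l : seq (idx m)) :
  measurable [set w | forall k, k \in l -> B k (Z k w)].
Proof.
elim: l => [|a l IH].
  by rewrite (_ : [set w | _] = setT); [exact: measurableT | apply/seteqP; split].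
rewrite (_ : [set w | _] = (setT `&` Z a @^-1` B a) `&` [set w | forall k, k \in l -> B k (Z k w)]).
  by apply: measurableI => //; exact: hZ.
apply/seteqP; split => w /=.
  move=> H; split; first by split => //; apply: H; rewrite mem_head.
  by move=> k kl; apply: H; rewrite inE kl orbT.
move=> [[_ Ha] H] k; rewrite inE => /orP [/eqP -> //|]; exact: H.
Qed.

Lemma Yv_meas g : measurable_fun setT (Yv g).
Proof.
apply: (measurability (Grect R m : set (set (Sp R m)))) => //.
move=> _ [E [B hB ->] <-]; rewrite setTI.
rewrite (_ : Yv g @^-1` _ = [set w | forall k, k \in index_enum (idx m) ->
   B k ((fun k w => X (g k).1.1.+1 w (g k).1.2 (g k).2) k w)]).
  apply: meas_seq => // k; exact: Xmeas.
apply/seteqP; split => w /=.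
  by move=> H k _; exact: H.
by move=> H k; apply: H; rewrite mem_index_enum.
Qed.

Lemma Yv_rect g (hg : involutive g) (B : idx m -> set R)
  (hB : forall k, measurable (B k)) :
  P (Yv g @^-1` rect R m B) = (\prod_(k : idx m) mu (B k))%E.
Proof.
pose J := map emb (index_enum (idx m)).
pose B' (x : nat * 'I_2 * 'I_2) := B (g (inord x.1.1, x.1.2, x.2)).
have uJ : uniq J.
  rewrite map_inj_uniq ?index_enum_uniq // => [[[a b] c]] [[a' b'] c'] /= [].
  by move=> /val_inj -> -> ->.
have mB' : forall x, x \in J -> measurable (B' x) by move=> x _; exact: hB.
have := Xind J B' uJ mB'.
have eK : forall k : idx m, (inord (emb k).1.1, (emb k).1.2, (emb k).2) = k.
  by move=> [[a b] c] /=; rewrite inord_val.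
have -> : \bigcap_(i in [set i | i \in J])
    ((fun w => X i.1.1.+1 w i.1.2 i.2) @^-1` B' i) = Yv g @^-1` rect R m B.
  apply/seteqP; split => w /=.
  - move=> H k; have := H (emb (g k)).
    rewrite /= map_f ?mem_index_enum // => /(_ isT).
    by rewrite /B' eK (hg k).
  - move=> H x /= /mapP [k _ ->].
    by rewrite /B' eK; move/(_ (g k)): H; rewrite /= (hg k).
move=> ->; rewrite big_map.
rewrite (eq_bigr (fun k => mu (B (g k)))); last first.
  by move=> k _; rewrite Xlaw /B' ?eK //; exact: hB.
by rewrite [RHS](reindex_inj (can_inj hg)).
Qed.

Lemma Yv_eq g (hg : involutive g) (A : set (Sp R m)) (mA : measurable A) :
  P (Yv g @^-1` A) = P (Yv id @^-1` A).
Proof.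
have hid : involutive (@id (idx m)) by [].
have setIG : setI_closed (Grect R m : set (set (Sp R m))).
  move=> _ _ [B1 h1 ->] [B2 h2 ->]; exists (fun k => B1 k `&` B2 k).
    by move=> k; exact: measurableI.
  apply/seteqP; split => y /=; first by move=> [H1 H2] k; split.
  by move=> H; split => k; case: (H k).
have GT : (Grect R m : set (set (Sp R m))) setT.
  by exists (fun _ => setT) => //; apply/seteqP; split.
have cov : \bigcup_(k : nat) (fun _ => setT : set (Sp R m)) k = setT.
  by apply/seteqP; split => // x _; exists 0%N.
have mg := Yv_meas g; have mid := Yv_meas id.
have := @measure_unique _ R (Sp R m) (Grect R m) (fun _ => setT) erefl setIG
  (fun _ => GT) cov (pushforward P (Yv g)) (pushforward P (Yv id)).
move=> /(_ mg mid) h; apply: h => //.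
  move=> _ [B hB ->]; exact: (etrans (Yv_rect g hg B hB) (esym (Yv_rect id hid B hB))).
move=> _; unfold pushforward; apply: (le_lt_trans (probability_le1 P _)); last exact: ltey.
rewrite -(setTI (_ @^-1` _)); exact: mg.
Qed.

End Prob.

Lemma disc_swap (R : realType) (A B : 'M[R]_2) :
  (forall i j, B i j = A i (rev_ord j)) -> 0 <= disc A + disc B.
Proof.
move=> H; rewrite /disc !H.
rewrite (_ : rev_ord (0 : 'I_2) = 1); last exact/val_inj.
rewrite (_ : rev_ord (1 : 'I_2) = 0); last exact/val_inj.
set a := A 0 0; set b := A 0 1; set c := A 1 0; set e := A 1 1.
have -> : (a - e) ^+ 2 + 4%:R * (b * c) + ((b - c) ^+ 2 + 4%:R * (a * e)) =
  (a + e) ^+ 2 + (b + c) ^+ 2 by ring.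
by rewrite addr_ge0 ?sqr_ge0.
Qed.

Lemma disc_meas (R : realType) m :
  measurable_fun setT (fun y : Sp R m => disc (Fp R m y m.+1)).
Proof.
rewrite /disc.
apply: measurable_realfun.measurable_funD.
  apply: measurable_realfun.measurable_funX.
  by apply: measurable_realfun.measurable_funB; exact: Fp_meas.
apply: measurable_realfun.measurable_funM; first exact: measurable_cst.
by apply: measurable_realfun.measurable_funM; exact: Fp_meas.
Qed.

Theorem mainTheorem20 (R : realType) (mu : probability R R)
  (d : measure_display) (T : measurableType d) (P : probability T R)
  (X : nat -> T -> 'M[R]_2)
  (Xmeas : forall k (i j : 'I_2), measurable_fun setT (fun w => X k.+1 w i j))
  (Xlaw : forall k (i j : 'I_2) (B : set R), measurable B ->
     P ((fun w => X k.+1 w i j) @^-1` B) = mu B)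
  (Xind : mutually_independent P
     (fun kij : nat * 'I_2 * 'I_2 => fun w => X kij.1.1.+1 w kij.1.2 kij.2))
  (n : nat) (hn : (1 <= n)%N) :
  ((1/2 : R)%:E <= P [set w | all_eigenvalues_real (prod_mx (X^~ w) n)])%E.
Proof.
case: n hn => // m _.
pose sw (x : idx m) : idx m :=
  (x.1.1, x.1.2, if x.1.1 == ord_max then rev_ord x.2 else x.2).
have hsw : involutive sw.
  by move=> [[a b] c]; rewrite /sw /=; case: eqP => //= _; rewrite rev_ordK.
have hid : involutive (@id (idx m)) by [].
pose f (y : Sp R m) := disc (Fp R m y m.+1).
have mf : measurable_fun setT f := disc_meas R m.
pose S0 : set (Sp R m) := f @^-1` [set x | 0 <= x].
have mS0 : measurable S0.
  have := mf measurableT _ (measurable_itv `[(0:R), +oo[).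
  rewrite setTI; congr measurable; apply/seteqP; split => y /=;
    by rewrite in_itv /= andbT.
pose Y1 := Yv R d T X m id; pose Y2 := Yv R d T X m sw.
have e12 : P (Y2 @^-1` S0) = P (Y1 @^-1` S0) :=
  Yv_eq R mu d T P X Xmeas Xlaw Xind m sw hsw S0 mS0.
have mE : forall g, measurable (Yv R d T X m g @^-1` S0).
  by move=> g; rewrite -(setTI (_ @^-1` _)); exact: Yv_meas.
have L1 : forall w, Fp R m (Y1 w) m.+1 = prod_mx (X^~ w) m.+1.
  move=> w; rewrite /Fp /prod_mx; apply: eq_big_nat => k /andP [k1 km].
  apply/matrixP => i j; rewrite !mxE /=.
  by case: k k1 km => // k' _ km; rewrite /= inordK.
have L2 : forall w i j, Fp R m (Y2 w) m.+1 i j = Fp R m (Y1 w) m.+1 i (rev_ord j).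
  move=> w i j; rewrite /Fp !(big_nat_recr m.+1 1) //=.
  rewrite (@eq_big_nat _ _ _ 1 m.+1 _ (fun k => Mk R m (Y1 w) k)); last first.
    move=> k /andP [k1 km]; apply/matrixP => a b; rewrite !mxE /= /sw /=.
    rewrite (_ : (inord k.-1 == ord_max :> 'I_m.+1) = false) //.
    apply/negbTE; apply/eqP => /(congr1 val); rewrite /= inordK.
      by case: k k1 km => // k' _ /=; rewrite ltnS => km ek; rewrite ek ltnn in km.
    by case: k k1 km => // k' _ /=; rewrite ltnS => km; apply: ltnW.
  rewrite -!mulmxE !mxE; apply: eq_bigr => l _; rewrite !mxE /sw /=.
  by rewrite (_ : (inord m == ord_max :> 'I_m.+1) = true) //; apply/eqP/val_inj; rewrite /= inordK.
have cov : forall w, S0 (Y1 w) \/ S0 (Y2 w).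
  move=> w; rewrite /S0 /f /=.
  have h := @disc_swap R _ _ (L2 w).
  case: (boolP (0 <= disc (Fp R m (Y1 w) m.+1))) => H; first by left.
  by right; rewrite -ltNge in H; lra.
have tg : [set w | all_eigenvalues_real (prod_mx (X^~ w) m.+1)] = Y1 @^-1` S0.
  apply/seteqP; split => w /=; rewrite -L1; [move/eig_real | move=> H; apply/eig_real]; by [].
rewrite tg.
have h1 : (1 <= P (Y1 @^-1` S0) + P (Y2 @^-1` S0))%E.
  rewrite -(probability_setT P).
  rewrite (_ : setT = Y1 @^-1` S0 `|` Y2 @^-1` S0); first by apply: measureU2; apply: mE.
  by apply/seteqP; split => w //= _; exact: cov.
rewrite e12 in h1.
move: h1 (measure_ge0 P (Y1 @^-1` S0)) (probability_le1 P (mE id)).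
case: (P (Y1 @^-1` S0)) => [r| |] //=.
rewrite -EFinD !lee_fin => h _ _; lra.
Qed.
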